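(* Let $\mu_1,\mu_2$ be probabilities on $(\Omega,\mathcal B_\Omega)$ and $\eta_1,\eta_2$ probabilities on $(\Lambda,\mathcal B_\Lambda)$, and consider the product probabilities $\mu_1\times\eta_1,\mu_2\times\eta_2$ on the product $\sigma$-field. Then: (1) $\mu_1\times\eta_1\ll\mu_2\times\eta_2$ if and only if $\mu_1\ll\mu_2$ and $\eta_1\ll\eta_2$; (2) if $\Omega,\Lambda$ are one-sided sequence spaces with shifts $T_\Omega,T_\Lambda$ (product shift $T_\Omega\times T_\Lambda$) and $\mu_2,\eta_2$ are stationary, then $\mu_1\times\eta_1\ll^a\mu_2\times\eta_2$ if and only if $\mu_1\ll^a\mu_2$ and $\eta_1\ll^a\eta_2$.
   Context: $\ll$ denotes absolute continuity. Asymptotic dominance: $\mu\ll^a\eta$ means that for every measurable $E$, $\eta(E)=0$ implies $\lim_{n\to\infty}\mu(T^{-n}E)=0$. Stationary: $\mu(T^{-1}E)=\mu(E)$ for all $E$. *)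

(* Defs.v *)
From HB Require Import structures.
From mathcomp Require Import all_boot all_order all_algebra.
From mathcomp Require Import all_classical all_reals all_analysis.
Set Implicit Arguments. Unset Strict Implicit. Unset Printing Implicit Defensive.
Import Order.TTheory GRing.Theory Num.Theory.
Local Open Scope classical_set_scope.
Local Open Scope ring_scope.

Definition seqspace (T : Type) := nat -> T.

HB.instance Definition _ (T : pointedType) := Pointed.on (seqspace T).

Definition seqspace_display : measure_display -> measure_display.
Proof. exact. Qed.

Section seqspace_measurable.
Context {d} {T : measurableType d}.

Definition seqspace_measurable : set (set (seqspace T)) :=
  <<s \bigcup_(n in [set: nat])
        preimage_set_system [set: seqspace T] (fun x : seqspace T => x n)
          measurable >>.

Let seq_set0 : seqspace_measurable set0.
Proof. exact: sigma_algebra0. Qed.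

Let seq_setC A : seqspace_measurable A -> seqspace_measurable (~` A).
Proof. exact: sigma_algebraC. Qed.

Let seq_bigcup (F : (set (seqspace T))^nat) :
  (forall i, seqspace_measurable (F i)) ->
  seqspace_measurable (\bigcup_i (F i)).
Proof. exact: sigma_algebra_bigcup. Qed.

HB.instance Definition _ := @isMeasurable.Build (seqspace_display d)
  (seqspace T) seqspace_measurable seq_set0 seq_setC seq_bigcup.

End seqspace_measurable.

Definition seq_shift {T : Type} (x : seqspace T) : seqspace T := fun n => x n.+1.

Definition prod_seq_shift {A B : Type} (p : seqspace A * seqspace B)
  : seqspace A * seqspace B := (seq_shift p.1, seq_shift p.2).

Section dynamics.
Context {d} {X : measurableType d} {R : realType}.

Definition stationary (T : X -> X) (mu : set X -> \bar R) : Prop :=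
  forall E, measurable E -> mu (T @^-1` E) = mu E.

Definition asymp_dominates (T : X -> X) (mu eta : set X -> \bar R) : Prop :=
  forall E, measurable E -> eta E = 0%E ->
    (fun n => mu ((iter n T) @^-1` E)) @ \oo --> 0%E.

End dynamics.

(* Main.v *)
Require Import Defs.
From HB Require Import structures.
From mathcomp Require Import all_boot all_order all_algebra.
From mathcomp Require Import all_classical all_reals all_analysis.
From mathcomp Require Import measurable_realfun.
Import Order.TTheory GRing.Theory Num.Theory.
Local Open Scope classical_set_scope.
Local Open Scope ring_scope.
Local Open Scope ereal_scope.
Section K.
Context (R : realType) d1 d2 (X : measurableType d1) (Y : measurableType d2).

Lemma key (P : probability X R) (Q : probability Y R) (H : set (X * Y))
  (F : set X) (eps : R) : measurable H -> measurable F -> (0 <= eps)%R ->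
  (forall x, ~ F x -> Q (xsection H x) <= eps%:E) ->
  (P \x Q) H <= P F + eps%:E.
Proof.
move=> mH mF e0 hQ.
rewrite /product_measure1.
have mh := @measurable_fun_xsection _ _ X Y R Q H mH.
have mi : measurable_fun setT (fun x => ((\1_F x : R)%:E : \bar R)).
  by apply/measurable_EFinP; exact: measurable_indic.
have mc : measurable_fun setT (fun x : X => eps%:E) by exact: measurable_cst.
apply: (@le_trans _ _ (\int[P]_x ((\1_F x)%:E + eps%:E))).
  apply: (ge0_le_integral P measurableT).
  - by move=> x _; exact: measure_ge0.
  - exact: mh.
  - exact: emeasurable_funD.
  move=> x _ /=; have [xF|xF] := boolP (x \in F).
    rewrite indicE xF /= (le_trans (probability_le1 _ _)) //.
      exact: measurable_xsection.
    by rewrite leeDl // lee_fin.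
  rewrite indicE (negbTE xF) add0e; apply: hQ.
  by move=> Fx; move: xF; rewrite (mem_set Fx).
rewrite (ge0_integralD P measurableT) //.
- rewrite integral_indic // setIT integral_cst //.
  by rewrite [X in _ * X](_ : _ = 1) ?mule1 //; exact: probability_setT.
Qed.
End K.

Section P1.
Context (R : realType) d1 d2 (X : measurableType d1) (Y : measurableType d2).

Lemma null_set_of (P : probability X R) (Q : probability Y R) (E : set (X * Y)) :
  measurable E -> (P \x Q) E = 0 ->
  exists N, [/\ measurable N, P N = 0 & forall x, ~ N x -> Q (xsection E x) = 0].
Proof.
move=> mE h0.
have mh := @measurable_fun_xsection _ _ X Y R Q E mE.
have : \int[P]_(x in setT) `|(Q \o xsection E) x| = 0.
  rewrite -h0 /product_measure1; apply: eq_integral => x _.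
  by rewrite gee0_abs //; exact: measure_ge0.
move/(ae_eq_integral_abs P measurableT mh) => [N [mN N0 sub]].
exists N; split => // x Nx; apply: contra_notP Nx => hx; apply: sub => /=.
by move=> /(_ I).
Qed.

Lemma part1 (mu1 mu2 : probability X R) (eta1 eta2 : probability Y R) :
  (mu1 \x eta1) `<< (mu2 \x eta2) <-> (mu1 `<< mu2 /\ eta1 `<< eta2).
Proof.
split.
  move=> /null_content_dominatesP h; split; apply/null_content_dominatesP.
    move=> A mA h2.
    have e1 : (mu1 \x eta1) (A `*` setT) = mu1 A.
      rewrite product_measure1E // [X in _ * X](_ : _ = 1) ?mule1 //.
      exact: probability_setT.
    have e2 : (mu2 \x eta2) (A `*` setT) = 0.
      by rewrite product_measure1E // h2 mul0e.
    by rewrite -e1; apply: h (measurableX mA measurableT) e2.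
  move=> A mA h2.
  have e1 : (mu1 \x eta1) (setT `*` A) = eta1 A.
    rewrite product_measure1E // [X in X * _](_ : _ = 1) ?mul1e //.
    exact: probability_setT.
  have e2 : (mu2 \x eta2) (setT `*` A) = 0.
    by rewrite product_measure1E // h2 mule0.
  by rewrite -e1; apply: h (measurableX measurableT mA) e2.
move=> [/null_content_dominatesP hmu /null_content_dominatesP heta].
apply/null_content_dominatesP => E mE h0.
have [N [mN N0 hN]] := null_set_of mu2 eta2 E mE h0.
apply/eqP; rewrite eq_le measure_ge0 andbT.
rewrite -(adde0 0) -{1}(hmu N mN N0).
apply: key => // x Nx.
by rewrite (heta _ (measurable_xsection _ mE) (hN x Nx)).
Qed.
End P1.

Section P2.
Context (R : realType).

Lemma iter_prod {A B : Type} n (p : seqspace A * seqspace B) :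
  iter n prod_seq_shift p = (iter n seq_shift p.1, iter n seq_shift p.2).
Proof. by elim: n => [|n IH] /=; [case: p|rewrite IH]. Qed.

Lemma mshift d (A : measurableType d) :
  measurable_fun (setT : set (seqspace A)) (@seq_shift A).
Proof.
apply: (@measurability _ _ _ _ setT _
  (\bigcup_(n in [set: nat]) preimage_set_system [set: seqspace A]
     (fun x : seqspace A => x n) measurable)) => //.
move=> _ [_ [k _ [B mB <-]] <-].
apply: sub_sigma_algebra; exists k.+1 => //; exists B => //.
by rewrite !setTI.
Qed.

Lemma miter d (A : measurableType d) n :
  measurable_fun (setT : set (seqspace A)) (iter n (@seq_shift A)).
Proof.
elim: n => [|n IH]; first exact: measurable_id.
rewrite (_ : iter n.+1 _ = seq_shift \o iter n seq_shift) //.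
by apply: measurableT_comp; [exact: mshift | exact: IH].
Qed.


Lemma cvg_le_e (u : nat -> \bar R) : u @ \oo --> 0 ->
  forall e : R, (0 < e)%R -> \forall n \near \oo, u n <= e%:E.
Proof.
move=> /fine_cvgP [fin cv] e e0.
have h2 := (cvgr0Pnorm_le _).1 cv e e0.
near=> n.
have finn : u n \is a fin_num by near: n; exact: fin.
have hn : (`|fine (u n)| <= e)%R by near: n; exact: h2.
by rewrite -(fineK finn) lee_fin (le_trans (ler_norm _) hn).
Unshelve. all: by end_near.
Qed.

Lemma cvge0 (u : nat -> \bar R) : (forall n, 0 <= u n) ->
  (forall e : R, (0 < e)%R -> \forall n \near \oo, u n <= e%:E) ->
  u @ \oo --> 0.
Proof.
move=> u0 h; apply/fine_cvgP; split.
  apply: filterS (h 1%R ltr01) => n hn.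
  by rewrite ge0_fin_numE // (le_lt_trans hn) // ltry.
apply/cvgr0Pnorm_le => e e0; apply: filterS (h e e0) => n /=.
move: (u0 n); case: (u n) => [r| |] //= r0; rewrite lee_fin => re.
by rewrite ger0_norm // -lee_fin.
Qed.


Lemma unif d (B : measurableType d) (eta1 eta2 : probability (seqspace B) R) :
  asymp_dominates seq_shift eta1 eta2 -> forall e : R, (0 < e)%R ->
  \forall n \near \oo, forall G, measurable G -> eta2 G = 0 ->
     eta1 (iter n seq_shift @^-1` G) <= e%:E.
Proof.
move=> h e e0.
pose bad n := exists G', [/\ measurable G', eta2 G' = 0 &
   e%:E < eta1 (iter n seq_shift @^-1` G')].
pose good n G := [/\ measurable G, eta2 G = 0 &
   (bad n -> e%:E < eta1 (iter n seq_shift @^-1` G))].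
have : forall n, exists G, good n G.
  move=> n; have [[G' [mG' G'0 hG']]|nb] := pselect (bad n).
    by exists G'; split => // _.
  by exists set0; split; [exact: measurable0|exact: measure0|move=> /nb].
move=> /choice [Gs hGs].
have mU : measurable (\bigcup_k Gs k).
  by apply: bigcup_measurable => k _; have [] := hGs k.
have U0 : eta2 (\bigcup_k Gs k) = 0.
  apply/negligibleP => //; apply: negligible_bigcup => k.
  by have [mk k0 _] := hGs k; apply/negligibleP.
have := cvg_le_e _ (h _ mU U0) _ e0.
apply: filterS => n hn G mG G0.
rewrite leNgt; apply/negP => hlt.
have [mk _ hk] := hGs n.
have := hk (ex_intro _ G (And3 mG G0 hlt)).
move=> hgt; move: hn; rewrite leNgt => /negP; apply.
apply: (lt_le_trans hgt); apply: le_measure.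
- by rewrite inE; have := miter _ B n measurableT _ mk; rewrite setTI.
- by rewrite inE; have := miter _ B n measurableT _ mU; rewrite setTI.
- by move=> x /= Gx; exists n.
Qed.


Lemma part2 d1 d2 (A : measurableType d1) (B : measurableType d2)
  (mu1 mu2 : probability (seqspace A) R) (eta1 eta2 : probability (seqspace B) R) :
  asymp_dominates prod_seq_shift (mu1 \x eta1) (mu2 \x eta2) <->
  (asymp_dominates seq_shift mu1 mu2 /\ asymp_dominates seq_shift eta1 eta2).
Proof.
have mpre : forall n (E : set (seqspace A * seqspace B)), measurable E ->
    measurable (iter n prod_seq_shift @^-1` E).
  move=> n E mE.
  have -> : iter n prod_seq_shift =
      (fun p : seqspace A * seqspace B => (iter n seq_shift p.1, iter n seq_shift p.2)).
    by apply: funext => p; exact: iter_prod.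
  have mf : measurable_fun setT (fun p : seqspace A * seqspace B =>
      (iter n seq_shift p.1, iter n seq_shift p.2)).
    apply: measurable_fun_pair; apply: measurableT_comp;
      [exact: miter|exact: measurable_fst|exact: miter|exact: measurable_snd].
  by have := mf measurableT _ mE; rewrite setTI.
split.
  move=> h; split.
    move=> E mE E0.
    have mX : measurable (E `*` [set: seqspace B]) := measurableX mE measurableT.
    have X0 : (mu2 \x eta2) (E `*` setT) = 0 by rewrite product_measure1E // [X in X * _](_ : _ = 0) ?mul0e.
    have eq n : (mu1 \x eta1) (iter n prod_seq_shift @^-1` (E `*` setT)) =
        mu1 (iter n seq_shift @^-1` E).
      have -> : iter n prod_seq_shift @^-1` (E `*` [set: seqspace B]) =
          (iter n seq_shift @^-1` E) `*` [set: seqspace B].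
        by apply/seteqP; split => -[x y]; rewrite /preimage /= iter_prod.
      rewrite product_measure1E //; last first.
        by have := miter _ A n measurableT _ mE; rewrite setTI.
      rewrite [X in _ * X](_ : _ = 1) ?mule1 //; exact: probability_setT.
    rewrite (_ : (fun n => _) = (fun n =>
      (mu1 \x eta1) (iter n prod_seq_shift @^-1` (E `*` setT)))).
      exact: h.
    by apply: funext => n; rewrite eq.
  move=> E mE E0.
  have mX : measurable ([set: seqspace A] `*` E) := measurableX measurableT mE.
  have X0 : (mu2 \x eta2) (setT `*` E) = 0 by rewrite product_measure1E // [X in _ * X](_ : _ = 0) ?mule0.
  have eq n : (mu1 \x eta1) (iter n prod_seq_shift @^-1` (setT `*` E)) =
      eta1 (iter n seq_shift @^-1` E).
    have -> : iter n prod_seq_shift @^-1` ([set: seqspace A] `*` E) =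
        [set: seqspace A] `*` (iter n seq_shift @^-1` E).
      by apply/seteqP; split => -[x y]; rewrite /preimage /= iter_prod.
    rewrite product_measure1E //; last first.
      by have := miter _ B n measurableT _ mE; rewrite setTI.
    rewrite [X in X * _](_ : _ = 1) ?mul1e //; exact: probability_setT.
  rewrite (_ : (fun n => _) = (fun n =>
    (mu1 \x eta1) (iter n prod_seq_shift @^-1` (setT `*` E)))).
    exact: h.
  by apply: funext => n; rewrite eq.
move=> [hmu heta] E mE E0.
have [N [mN N0 hN]] := null_set_of _ _ _ _ _ mu2 eta2 E mE E0.
have hm := cvg_le_e _ (hmu N mN N0).
have hu := unif _ _ _ _ heta.
apply: cvge0 => [n|e e0]; first exact: measure_ge0.
have e2 : (0 < e / 2)%R by rewrite divr_gt0.
near=> n.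
have h1 : mu1 (iter n seq_shift @^-1` N) <= (e / 2)%:E.
  by near: n; exact: hm _ e2.
have h2 : forall G, measurable G -> eta2 G = 0 ->
    eta1 (iter n seq_shift @^-1` G) <= (e / 2)%:E.
  by near: n; exact: hu _ e2.
have mF : measurable (iter n seq_shift @^-1` N).
  by have := miter _ A n measurableT _ mN; rewrite setTI.
apply: le_trans (key _ _ _ _ _ mu1 eta1 (iter n prod_seq_shift @^-1` E)
   (iter n seq_shift @^-1` N) (e / 2) (mpre n E mE) mF (ltW e2) _) _.
  move=> x Nx.
  have -> : xsection (iter n prod_seq_shift @^-1` E) x =
      iter n seq_shift @^-1` xsection E (iter n seq_shift x).
    by apply/seteqP; split => y; rewrite /xsection /preimage /= !in_setE /= iter_prod.
  by apply: h2; [exact: measurable_xsection | exact: hN].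
by rewrite (le_trans (leeD h1 (lexx _))) // -EFinD -splitr.
Unshelve. all: by end_near.
Qed.

End P2.

Theorem lemma20 (R : realType) :
  (* (1) absolute continuity of product probabilities *)
  (forall (d1 d2 : measure_display)
     (Omega : measurableType d1) (Lambda : measurableType d2)
     (mu1 mu2 : probability Omega R) (eta1 eta2 : probability Lambda R),
     (mu1 \x eta1) `<< (mu2 \x eta2) <-> (mu1 `<< mu2 /\ eta1 `<< eta2))
  /\
  (* (2) asymptotic dominance on one-sided sequence spaces *)
  (forall (d1 d2 : measure_display)
     (A : measurableType d1) (B : measurableType d2)
     (mu1 mu2 : probability (seqspace A) R)
     (eta1 eta2 : probability (seqspace B) R),
     stationary seq_shift mu2 -> stationary seq_shift eta2 ->
     (asymp_dominates prod_seq_shift (mu1 \x eta1) (mu2 \x eta2) <->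
      (asymp_dominates seq_shift mu1 mu2 /\ asymp_dominates seq_shift eta1 eta2))).
Proof.
split.
  by move=> d1 d2 Omega Lambda mu1 mu2 eta1 eta2; exact: part1.
by move=> d1 d2 A B mu1 mu2 eta1 eta2 _ _; exact: part2.
Qed.
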